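(* Let $2\le n\le m$ be integers with $\gamma_{2t}(K_n\Box K_m)<2n$. Then \[ \gamma_{2t}(K_n\Box K_m)\le\gamma_{2t}(K_{n+1}\Box K_m)\le\gamma_{2t}(K_n\Box K_m)+1. \]
   Context: For a graph $G=(V,E)$, a set $S\subseteq V$ is a total $2$-dominating set if every vertex of $V$ (including those in $S$) is adjacent to at least $2$ vertices of $S$; $\gamma_{2t}(G)$ is the minimum cardinality of such a set. $G\Box H$ denotes the Cartesian product: vertex set $V(G)\times V(H)$, with $(u_1,v_1)\sim(u_2,v_2)$ iff either $u_1=u_2$ and $v_1\sim v_2$, or $v_1=v_2$ and $u_1\sim u_2$. $K_n$ is the complete graph on $n$ vertices. *)

(* Defs.v *)
From mathcomp Require Import all_boot.
Set Implicit Arguments. Unset Strict Implicit. Unset Printing Implicit Defensive.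

Definition nbr_in (T : finType) (e : rel T) (S : {set T}) (v : T) : {set T} :=
  [set u in S | e v u].

Definition total2dom (T : finType) (e : rel T) (S : {set T}) : bool :=
  [forall v : T, 2 <= #|nbr_in e S v|].

(* gamma_{2t}: minimum cardinality of a total 2-dominating set.
   (If none exists, the value defaults to #|T|.+1; this never happens
   for the graphs considered below, where V itself is such a set.) *)
Definition gamma2t (T : finType) (e : rel T) : nat :=
  \big[minn/#|T|.+1]_(S : {set T} | total2dom e S) #|S|.

Definition K_rel (n : nat) : rel 'I_n := fun i j => i != j.

Definition cart_rel (A B : finType) (eA : rel A) (eB : rel B) : rel (A * B) :=
  fun x y => ((x.1 == y.1) && eB x.2 y.2) || ((x.2 == y.2) && eA x.1 y.1).

Definition gKK (n m : nat) : nat :=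
  gamma2t (cart_rel (@K_rel n) (@K_rel m)).

(* Main.v *)
Require Import Defs.
From mathcomp Require Import all_boot zify.
Set Implicit Arguments. Unset Strict Implicit. Unset Printing Implicit Defensive.

Section Aux.
Variables p m : nat.
Local Notation E := (cart_rel (@K_rel p) (@K_rel m)).

Definition rs (S : {set 'I_p * 'I_m}) a b := [set j | ((a,j) \in S) && (j != b)].
Definition cs (S : {set 'I_p * 'I_m}) a b := [set i | ((i,b) \in S) && (i != a)].

Lemma in_rs S a b j : (j \in rs S a b) = ((a,j) \in S) && (j != b).
Proof. by rewrite inE. Qed.
Lemma in_cs S a b i : (i \in cs S a b) = ((i,b) \in S) && (i != a).
Proof. by rewrite inE. Qed.

Lemma in_rowim (a : 'I_p) (R : {set 'I_m}) x y :
  ((x,y) \in (fun j => (a,j)) @: R) = (x == a) && (y \in R).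
Proof.
apply/imsetP/andP => [[j jR [-> ->]]|[/eqP -> yR]]; first by split.
by exists y.
Qed.

Lemma in_colim (b : 'I_m) (C : {set 'I_p}) x y :
  ((x,y) \in (fun i => (i,b)) @: C) = (y == b) && (x \in C).
Proof.
apply/imsetP/andP => [[j jR [-> ->]]|[/eqP -> yR]]; first by split.
by exists x.
Qed.

Lemma nbr_card S a b :
  #|nbr_in E S (a,b)| = #|rs S a b| + #|cs S a b|.
Proof.
have -> : nbr_in E S (a,b) =
   (fun j => (a,j)) @: rs S a b :|: (fun i => (i,b)) @: cs S a b.
  apply/setP => [[x y]]; rewrite /nbr_in !inE in_rowim in_colim !inE /cart_rel /K_rel /=.
  case: (eqVneq x a) => [->|xa]; case: (eqVneq y b) => [->|yb];
    rewrite ?eqxx ?andbF ?andbT ?orbF //= ?(eq_sym a) ?(eq_sym b) ?xa ?yb ?andbT ?andbF //=.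
rewrite cardsU !card_imset; last 2 first.
- by move=> i1 i2 [].
- by move=> j1 j2 [].
have -> : (fun j => (a,j)) @: rs S a b :&: (fun i => (i,b)) @: cs S a b = set0.
  apply/setP => [[x y]]; rewrite !inE in_rowim in_colim !inE.
  by case: (eqVneq x a) => [->|]; case: (eqVneq y b) => [->|] //=; rewrite ?eqxx ?andbF.
by rewrite cards0 subn0.
Qed.

Lemma t2P S : reflect (forall a b, 2 <= #|rs S a b| + #|cs S a b|) (total2dom E S).
Proof.
apply: (iffP forallP) => [H a b|H [a b]]; rewrite -?nbr_card; first exact: (H (a,b)).
by rewrite nbr_card.
Qed.

Lemma gamma_le S : total2dom E S -> gamma2t E <= #|S|.
Proof.
move=> H; rewrite /gamma2t.
have: S \in index_enum {set 'I_p * 'I_m} by rewrite mem_index_enum.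
elim: (index_enum _) => [//|x s IH]; rewrite inE big_cons.
case/orP => [/eqP <-|/IH]; first by rewrite H geq_minl.
by case: (total2dom E x) => // h; rewrite geq_min h orbT.
Qed.

Lemma gamma_wit : gamma2t E < #|{: 'I_p * 'I_m}|.+1 ->
  exists2 S, total2dom E S & #|S| = gamma2t E.
Proof.
rewrite /gamma2t.
elim/big_rec: _ => [|S x HS IH]; first by rewrite ltnn.
rewrite /minn; case: (ltnP #|S| x) => h; first by move=> _; exists S.
by move=> /IH.
Qed.

Lemma cardS_sum (S : {set 'I_p * 'I_m}) :
  #|S| = \sum_(i < p) #|[set j | (i,j) \in S]|.
Proof.
rewrite -sum1_card big_mkcond /=.
transitivity (\sum_(u : 'I_p * 'I_m) (if (u.1,u.2) \in S then 1 else 0)).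
  by apply: eq_bigr => -[a b] _.
rewrite -(pair_bigA _ (fun i j => if (i,j) \in S then 1 else 0)) /=.
apply: congr_big => // i _; rewrite -sum1_card [RHS]big_mkcond /=.
by apply: congr_big => // j _; rewrite inE.
Qed.

Lemma row_small (S : {set 'I_p * 'I_m}) : #|S| < 2 * p ->
  exists i, #|[set j | (i,j) \in S]| <= 1.
Proof.
move=> H; apply/existsP; apply: contraLR H; rewrite negb_exists -leqNgt => /forallP H.
have : \sum_(i < p) 2 <= \sum_(i < p) #|[set j | (i,j) \in S]|.
  by apply: leq_sum => i _; rewrite leqNgt -[_ < 2]/(_ <= 1) H.
by rewrite sum_nat_const card_ord -cardS_sum mulnC.
Qed.

End Aux.

Lemma small_sub m (A : {set 'I_m}) (j0 : 'I_m) : #|A| <= 1 -> exists c, A \subset [set c].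
Proof.
case: (set_0Vmem A) => [->|[x xA]] h; first by exists j0; rewrite sub0set.
exists x; apply/subsetP => y yA; rewrite inE; apply/eqP.
by move/card_le1_eqP: h => h; apply: h.
Qed.

Lemma widen_inj n : injective (widen_ord (leqnSn n)).
Proof. by move=> x y h; apply: val_inj; exact: (congr1 val h). Qed.

Section Upper.
Variables n m : nat.
Variables (S : {set 'I_n * 'I_m}) (i0 : 'I_n) (c : 'I_m).
Hypothesis HS : total2dom (cart_rel (@K_rel n) (@K_rel m)) S.
Hypothesis Hrow : [set j | (i0,j) \in S] \subset [set c].

Definition wd := widen_ord (leqnSn n).
Definition S1 : {set 'I_n.+1 * 'I_m} :=
  (ord_max, c) |: ((fun u => (wd u.1, u.2)) @: S).

Lemma wd_max x : (wd x == ord_max) = false.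
Proof. by apply/negbTE; rewrite -(inj_eq val_inj) /= neq_ltn ltn_ord. Qed.

Lemma pinj : injective (fun u : 'I_n * 'I_m => (wd u.1, u.2)).
Proof. by move=> [a b] [a1 b1] [/val_inj -> ->]. Qed.

Lemma inS1 x y : ((wd x, y) \in S1) = ((x,y) \in S).
Proof.
rewrite !inE xpair_eqE wd_max /=.
by rewrite (@mem_imset _ _ (fun u : 'I_n * 'I_m => (wd u.1, u.2)) S (x,y) pinj).
Qed.

Lemma S1_card : #|S1| <= #|S|.+1.
Proof. by rewrite cardsU1 (card_imset _ pinj); case: (_ \notin _) => //=; rewrite add0n leqnSn. Qed.

Lemma S1_dom : total2dom (cart_rel (@K_rel n.+1) (@K_rel m)) S1.
Proof.
apply/t2P => a b.
case: (eqVneq a ord_max) => [->|ha].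
  apply: leq_trans (t2P _ HS i0 b) _; apply: leq_add.
    apply: subset_leq_card; apply/subsetP => j; rewrite !in_rs => /andP[hj jb].
    have : j \in [set c] by apply: (subsetP Hrow); rewrite inE.
    by move/set1P => E; subst j; rewrite !inE eqxx jb.
  rewrite -(card_imset (mem (cs S _ b)) (@widen_inj n)).
  apply: subset_leq_card; apply/subsetP => _ /imsetP[i hi ->].
  move: hi; rewrite (in_cs S) => /andP[hi _].
  by rewrite in_cs inS1 hi wd_max.
have [a' ->] : exists a', a = wd a'.
  have h : a < n by rewrite ltn_neqAle -ltnS ltn_ord andbT; move: ha; rewrite -(inj_eq val_inj).
  by exists (Ordinal h); apply: val_inj.
apply: leq_trans (t2P _ HS a' b) _; apply: leq_add.
  apply: subset_leq_card; apply/subsetP => j; rewrite !in_rs => /andP[hj jb].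
  by rewrite inS1 hj.
rewrite -(card_imset (mem (cs S _ b)) (@widen_inj n)).
apply: subset_leq_card; apply/subsetP => _ /imsetP[i hi ->].
move: hi; rewrite (in_cs S) => /andP[hi ia].
by rewrite in_cs inS1 hi (inj_eq (@widen_inj n)).
Qed.
End Upper.

Section Lower.
Variables n m : nat.
Hypothesis h2n : 2 <= n.
Hypothesis hnm : n <= m.
Variables (S : {set 'I_n.+1 * 'I_m}) (r : 'I_n.+1) (c : 'I_m).
Hypothesis HS : total2dom (cart_rel (@K_rel n.+1) (@K_rel m)) S.
Hypothesis Hrow : [set j | (r,j) \in S] \subset [set c].
Hypothesis Hsmall : #|S| < 2 * n.

Definition g : 'I_n -> 'I_n.+1 := lift r.
Lemma g_inj : injective g. Proof. exact: lift_inj. Qed.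
Definition S0 : {set 'I_n * 'I_m} := [set u | (g u.1, u.2) \in S].
Lemma in_S0 x y : ((x,y) \in S0) = ((g x, y) \in S). Proof. by rewrite inE. Qed.

Lemma qinj : injective (fun u : 'I_n * 'I_m => (g u.1, u.2)).
Proof.
move=> [a b] [a1 b1] /= E.
have := congr1 snd E; have := congr1 fst E => /= /g_inj -> -> //.
Qed.

Lemma S0_card : #|S0| + ((r,c) \in S) <= #|S|.
Proof.
rewrite (cardsD1 (r,c) S) addnC leq_add2l -(card_imset (mem S0) qinj).
apply: subset_leq_card; apply/subsetP => _ /imsetP[[x y] hx ->].
rewrite !inE xpair_eqE negb_and (eq_sym _ r) neq_lift /=.
by rewrite in_S0 in hx.
Qed.

Lemma rs_eq a b : rs S0 a b = rs S (g a) b.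
Proof. by apply/setP => j; rewrite !in_rs in_S0. Qed.

Lemma col_help a b : (r,b) \notin S -> #|cs S (g a) b| <= #|cs S0 a b|.
Proof.
move=> hrb; rewrite -(card_imset (mem (cs S0 a b)) g_inj).
apply: subset_leq_card; apply/subsetP => i; rewrite in_cs => /andP[hi ia].
case: (unliftP r i) hi ia => [i' ->|->] hi ia; last by rewrite hi in hrb.
by apply/imsetP; exists i' => //; rewrite in_cs in_S0 -(inj_eq g_inj); apply/andP; split.
Qed.

Lemma row_other b : b != c -> (r,b) \notin S.
Proof.
move=> bc; apply/negP => hb.
have : b \in [set c] by apply: (subsetP Hrow); rewrite inE.
by rewrite inE (negbTE bc).
Qed.

Lemma caseA : (r,c) \notin S -> total2dom (cart_rel (@K_rel n) (@K_rel m)) S0.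
Proof.
move=> hrc; apply/t2P => a b.
have hrb : (r,b) \notin S by case: (eqVneq b c) => [->//|]; exact: row_other.
apply: leq_trans (t2P _ HS (g a) b) _.
by rewrite rs_eq leq_add2l col_help.
Qed.

Lemma rs_r_small j : #|rs S r j| <= 1.
Proof.
rewrite -(cards1 c); apply: subset_leq_card; apply/subsetP => x; rewrite in_rs => /andP[hx _].
by apply: (subsetP Hrow); rewrite inE.
Qed.

Lemma free_k : (r,c) \in S -> exists k, (g k, c) \notin S.
Proof.
move=> hrc; apply/existsP; move: Hsmall; apply: contraLR.
rewrite negb_exists -leqNgt => /forallP hk.
have full : forall i, (i,c) \in S.
  by move=> i; case: (unliftP r i) => [i' ->|->] //; move: (hk i'); rewrite negbK.
rewrite -(cardsID [set u : 'I_n.+1 * 'I_m | u.2 == c] S).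
have h1 : n.+1 <= #|S :&: [set u : 'I_n.+1 * 'I_m | u.2 == c]|.
  apply: (@leq_trans #|[set (i, c) | i in [set: 'I_n.+1]]|).
    by rewrite (card_imset _ (fun i j (e : (i,c) = (j,c)) => congr1 fst e)) cardsT card_ord.
  apply: subset_leq_card; apply/subsetP => _ /imsetP[i _ ->].
  by rewrite !inE full eqxx.
have h2 : m.-1 <= #|S :\: [set u : 'I_n.+1 * 'I_m | u.2 == c]|.
  apply: leq_trans (leq_imset_card snd _).
  have -> : m.-1 = #|[set~ c]| by rewrite cardsC1 card_ord.
  apply: subset_leq_card; apply/subsetP => j; rewrite !inE => jc.
  have := t2P _ HS r j; have := rs_r_small j.
  case: (set_0Vmem (cs S r j)) => [->|[i hi]].
    by rewrite cards0 addn0 => h1' h2'; move: (leq_trans h2' h1').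
  move: hi; rewrite in_cs => /andP[hi _] _ _.
  by apply/imsetP; exists (i,j) => //; rewrite !inE /= jc hi.
have m0 : 0 < m by apply: leq_trans hnm; apply: leq_trans h2n.
apply: leq_trans (leq_add h1 h2).
by rewrite mul2n -addnn addSn -addnS prednK // leq_add2l.
Qed.

Section CaseB.
Variable k : 'I_n.
Hypothesis hk : (g k, c) \notin S.
Hypothesis hrc : (r,c) \in S.
Definition S2 : {set 'I_n * 'I_m} := (k,c) |: S0.

Lemma S2_card : #|S2| <= #|S|.
Proof.
apply: leq_trans (S0_card); rewrite hrc cardsU1 addnC leq_add2l.
by case: (_ \notin _).
Qed.

Lemma S2_dom : total2dom (cart_rel (@K_rel n) (@K_rel m)) S2.
Proof.
apply/t2P => a b.
case: (eqVneq b c) => [->|bc]; last first.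
  apply: leq_trans (t2P _ HS (g a) b) _.
  rewrite -rs_eq; apply: leq_add.
    apply: subset_leq_card; apply/subsetP => j; rewrite !in_rs => /andP[hj ->].
    by rewrite andbT inE hj orbT.
  apply: leq_trans (col_help a (row_other bc)) _.
  apply: subset_leq_card; apply/subsetP => i; rewrite !in_cs => /andP[hi ->].
  by rewrite andbT inE hi orbT.
apply: leq_trans (leq_addl _ _).
set B0 := [set i | (g i, c) \in S].
have hB0 : 2 <= #|B0|.
  have := t2P _ HS r c.
  have -> : rs S r c = set0.
    apply/setP => j; rewrite in_rs inE.
    apply/negP => /andP[hj jc].
    have : j \in [set c] by apply: (subsetP Hrow); rewrite inE.
    by rewrite inE (negbTE jc).
  rewrite cards0 add0n => h; apply: leq_trans h _.
  rewrite -(card_imset (mem B0) g_inj).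
  apply: subset_leq_card; apply/subsetP => i; rewrite in_cs => /andP[hi ir].
  case: (unliftP r i) hi ir => [i' ->|->] hi ir; last by rewrite eqxx in ir.
  by apply/imsetP; exists i' => //; rewrite inE.
have hkB : k \notin B0 by rewrite inE.
have h3 : 3 <= #|k |: B0| by rewrite cardsU1 hkB.
have h4 : #|k |: B0| <= 1 + #|(k |: B0) :\ a|.
  by rewrite (cardsD1 a (k |: B0)) leq_add2r leq_b1.
have h5 : 2 <= #|(k |: B0) :\ a|.
  by rewrite -(leq_add2l 1); apply: leq_trans h3 h4.
apply: leq_trans h5 _.
apply: subset_leq_card; apply/subsetP => i; rewrite !inE => /andP[ia /orP[/eqP E|hi]].
  by subst i; rewrite eqxx ia.
by rewrite hi orbT.
Qed.
End CaseB.

End Lower.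

Theorem mainTheorem6 (n m : nat) (h2n : 2 <= n) (hnm : n <= m)
  (hlt : gKK n m < 2 * n) :
  gKK n m <= gKK n.+1 m <= (gKK n m).+1.
Proof.
have hm2 : 2 <= m by lia.
have m0 : 0 < m by lia.
have h2nm : 2 * n <= n * m by rewrite mulnC leq_mul2l hm2 orbT.
set j0 : 'I_m := Ordinal m0.
have cT : forall p, #|{: 'I_p * 'I_m}| = p * m by move=> p; rewrite card_prod !card_ord.
have [S HS HSc] : exists2 S, total2dom (cart_rel (@K_rel n) (@K_rel m)) S & #|S| = gKK n m.
  apply: gamma_wit; rewrite cT ltnS; apply: ltnW; exact: leq_trans hlt h2nm.
apply/andP; split.
  case: (leqP (2 * n) (gKK n.+1 m)) => h; first by apply: ltnW; apply: leq_trans hlt h.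
  have [S' HS' HSc'] : exists2 S, total2dom (cart_rel (@K_rel n.+1) (@K_rel m)) S & #|S| = gKK n.+1 m.
    apply: gamma_wit; rewrite cT ltnS; apply: ltnW; apply: leq_trans h (leq_trans h2nm _).
    by rewrite leq_mul2r leqnSn orbT.
  have hsm : #|S'| < 2 * n by rewrite HSc'.
  have hs2 : #|S'| < 2 * n.+1 by apply: leq_trans hsm _; rewrite leq_mul2l leqnSn orbT.
  have [r hr] := row_small hs2.
  have [c hc] := small_sub j0 hr.
  case hrc: ((r,c) \in S').
    have [k hk] := free_k h2n hnm HS' hc hsm hrc.
    apply: leq_trans (gamma_le (S2_dom HS' hc hk)) _.
    by rewrite -HSc'; apply: S2_card.
  apply: leq_trans (gamma_le (caseA HS' hc (negbT hrc))) _.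
  by rewrite -HSc'; have := S0_card S' r c; rewrite hrc addn0.
have hs : #|S| < 2 * n by rewrite HSc.
have [i0 hi0] := row_small hs.
have [c hc] := small_sub j0 hi0.
apply: leq_trans (gamma_le (S1_dom HS hc)) _.
by rewrite -HSc; apply: S1_card.
Qed.
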